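(* For $0\le\alpha,\beta\le d$, with $s_0=z$ and $s_\alpha=(1+w_\alpha v_\alpha)\cdots(1+w_1v_1)z$ for $\alpha\geq1$, $$\{\!\{s_\alpha,s_\beta\}\!\}=\tfrac12(e_0\otimes s_\alpha s_\beta-s_\beta s_\alpha\otimes e_0)+\tfrac12o(\alpha,\beta)(s_\beta\otimes s_\alpha-s_\alpha\otimes s_\beta).$$
   Context: Fix $d\ge1$; $o(\alpha,\beta)=0,1,-1$ according as $\alpha=\beta,\alpha<\beta,\alpha>\beta$. Let $\mathbb C\bar Q$ be the path algebra generated by orthogonal idempotents $e_0,e_\infty$ with $e_0+e_\infty=1$ and arrows $x,y$ (loops at vertex $0$: $x=e_0xe_0$, $y=e_0ye_0$), $v_\alpha=e_\infty v_\alpha e_0$, $w_\alpha=e_0w_\alpha e_\infty$ ($\alpha=1,\dots,d$); paths are written left to right. Let $\mathcal A^\times$ be obtained by formally inverting $1+xy,1+yx,1+w_\alpha v_\alpha,1+v_\alpha w_\alpha$ and adjoining $x^{-1}=e_0x^{-1}e_0$ with $xx^{-1}=x^{-1}x=e_0$; put $z=y+x^{-1}$ (invertible in $e_0\mathcal A^\times e_0$). A double bracket is a bilinear map $\{\!\{-,-\}\!\}:\mathcal A^\times\times\mathcal A^\times\to\mathcal A^\times\otimes\mathcal A^\times$ with $\{\!\{a,b\}\!\}=-\{\!\{b,a\}\!\}^\circ$ ($(u\otimes v)^\circ=v\otimes u$) and $\{\!\{a,bc\}\!\}=b\{\!\{a,c\}\!\}+\{\!\{a,b\}\!\}c$ for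 the outer bimodule structure $b(u\otimes v)c=bu\otimes vc$. The double bracket used is the unique one vanishing on $e_0,e_\infty$ with $\{\!\{x,x\}\!\}=\tfrac12(x^2\otimes e_0-e_0\otimes x^2)$, $\{\!\{y,y\}\!\}=\tfrac12(e_0\otimes y^2-y^2\otimes e_0)$, $\{\!\{x,y\}\!\}=e_0\otimes e_0+\tfrac12(yx\otimes e_0+e_0\otimes xy+y\otimes x-x\otimes y)$, $\{\!\{u,w_\alpha\}\!\}=\tfrac12(e_0\otimes uw_\alpha-u\otimes w_\alpha)$, $\{\!\{u,v_\alpha\}\!\}=\tfrac12(v_\alpha u\otimes e_0-v_\alpha\otimes u)$ for $u\in\{x,y\}$, $\{\!\{v_\alpha,v_\beta\}\!\}=\tfrac12o(\beta,\alpha)(v_\alpha\otimes v_\beta+v_\beta\otimes v_\alpha)$, $\{\!\{w_\alpha,w_\beta\}\!\}=\tfrac12o(\beta,\alpha)(w_\alpha\otimes w_\beta+w_\beta\otimes w_\alpha)$, $\{\!\{v_\alpha,w_\beta\}\!\}=\delta_{\alpha\beta}(e_0\otimes e_\infty+\tfrac12w_\alpha v_\alpha\otimes e_\infty+\tfrac12e_0\otimes v_\alpha w_\alpha)+\tfrac12o(\alpha,\beta)(e_0\otimes v_\alpha w_\beta+w_\beta v_\alpha\otimes e_\infty)$, extended uniquely to $\mathcal A^\times$ (it also satisfies $\{\!\{bc,a\}\!\}=\{\!\{b,a\}\!\}'c\otimes\{\!\{b,a\}\!\}''+\{\!\{c,a\}\!\}'\otimes b\{\!\{c,a\}\!\}''$).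 *)

(* Defs.v *)
From HB Require Import structures.
From mathcomp Require Import all_boot all_order all_algebra.
Set Implicit Arguments. Unset Strict Implicit. Unset Printing Implicit Defensive.
Import Order.TTheory GRing.Theory Num.Theory.
Local Open Scope ring_scope.

Definition osgn (F : pzRingType) (a b : nat) : F :=
  if a == b then 0 else if (a < b)%N then 1 else -1.

(* A model of the target A (x) A of a double bracket on the F-algebra A:
   an F-vector space T with a bilinear map tens : A -> A -> T (u (x) v),
   the outer A-bimodule structure (lact b t = b t, ract t c = t c) with
   b (u (x) v) c = b u (x) v c, and the flip t |-> t° with (u (x) v)° = v (x) u. *)
Record tensor_model (F : fieldType) (A : algType F) (T : lmodType F)
    (tens : A -> A -> T) (lact : A -> T -> T) (ract : T -> A -> T)
    (swap : T -> T) : Prop := TensorModel {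
  tensDl : forall u1 u2 v, tens (u1 + u2) v = tens u1 v + tens u2 v;
  tensDr : forall u v1 v2, tens u (v1 + v2) = tens u v1 + tens u v2;
  tensZl : forall (k : F) u v, tens (k *: u) v = k *: tens u v;
  tensZr : forall (k : F) u v, tens u (k *: v) = k *: tens u v;
  lactDr : forall b t1 t2, lact b (t1 + t2) = lact b t1 + lact b t2;
  lactZr : forall b (k : F) t, lact b (k *: t) = k *: lact b t;
  lactDl : forall b1 b2 t, lact (b1 + b2) t = lact b1 t + lact b2 t;
  lactZl : forall b (k : F) t, lact (k *: b) t = k *: lact b t;
  ractDl : forall t1 t2 c, ract (t1 + t2) c = ract t1 c + ract t2 c;
  ractZl : forall (k : F) t c, ract (k *: t) c = k *: ract t c;
  ractDr : forall t c1 c2, ract t (c1 + c2) = ract t c1 + ract t c2;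
  ractZr : forall t (k : F) c, ract t (k *: c) = k *: ract t c;
  lact1 : forall t, lact 1 t = t;
  ract1 : forall t, ract t 1 = t;
  lactM : forall b1 b2 t, lact (b1 * b2) t = lact b1 (lact b2 t);
  ractM : forall t c1 c2, ract t (c1 * c2) = ract (ract t c1) c2;
  lact_ract : forall b t c, lact b (ract t c) = ract (lact b t) c;
  lact_tens : forall b u v, lact b (tens u v) = tens (b * u) v;
  ract_tens : forall u v c, ract (tens u v) c = tens u (v * c);
  swapD : forall t1 t2, swap (t1 + t2) = swap t1 + swap t2;
  swapZ : forall (k : F) t, swap (k *: t) = k *: swap t;
  swapK : forall t, swap (swap t) = t;
  swap_tens : forall u v, swap (tens u v) = tens v u
}.

(* inner bimodule action  b * (u (x) v) * c = u c (x) b v  *)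
Definition inner_act (F : fieldType) (A : algType F) (T : lmodType F)
    (lact : A -> T -> T) (ract : T -> A -> T) (swap : T -> T)
    (b : A) (t : T) (c : A) : T :=
  swap (ract (lact b (swap t)) c).

(* A double bracket {{-,-}} = br : bilinear, {{a,b}} = -{{b,a}}°,
   {{a,bc}} = b{{a,c}} + {{a,b}}c (outer), and
   {{bc,a}} = {{b,a}}'c (x) {{b,a}}'' + {{c,a}}' (x) b{{c,a}}'' (inner). *)
Record double_bracket (F : fieldType) (A : algType F) (T : lmodType F)
    (lact : A -> T -> T) (ract : T -> A -> T) (swap : T -> T)
    (br : A -> A -> T) : Prop := DoubleBracket {
  brDl : forall a1 a2 b, br (a1 + a2) b = br a1 b + br a2 b;
  brDr : forall a b1 b2, br a (b1 + b2) = br a b1 + br a b2;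
  brZl : forall (k : F) a b, br (k *: a) b = k *: br a b;
  brZr : forall (k : F) a b, br a (k *: b) = k *: br a b;
  br_skew : forall a b, br a b = - swap (br b a);
  br_leibniz : forall a b c, br a (b * c) = lact b (br a c) + ract (br a b) c;
  br_leibnizl : forall a b c,
    br (b * c) a = inner_act lact ract swap 1 (br b a) c
                   + inner_act lact ract swap b (br c a) 1
}.

(* Relations of the localized path algebra A^x of the double quiver:
   vertices e0, einf; loops x, y at 0; arrows v_a : 0 -> inf (v_a = einf v_a e0),
   w_a : inf -> 0 (w_a = e0 w_a einf), a = 1..d (paths left to right);
   xinv = x^{-1} in e0 A e0; 1+xy, 1+yx, 1+w_a v_a, 1+v_a w_a invertible. *)
Definition invertible (F : fieldType) (A : algType F) (a : A) : Prop :=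
  exists b : A, a * b = 1 /\ b * a = 1.

Record quiver_relations (F : fieldType) (A : algType F) (d : nat)
    (e0 einf x y xinv : A) (v w : nat -> A) : Prop := QuiverRelations {
  e0_idem : e0 * e0 = e0;
  einf_idem : einf * einf = einf;
  e0_einf : e0 * einf = 0;
  einf_e0 : einf * e0 = 0;
  e0_einf_sum : e0 + einf = 1;
  x_at0 : x = e0 * x * e0;
  y_at0 : y = e0 * y * e0;
  v_arrow : forall a, (1 <= a <= d)%N -> v a = einf * v a * e0;
  w_arrow : forall a, (1 <= a <= d)%N -> w a = e0 * w a * einf;
  xinv_at0 : xinv = e0 * xinv * e0;
  x_xinv : x * xinv = e0;
  xinv_x : xinv * x = e0;
  inv_1xy : invertible (1 + x * y);
  inv_1yx : invertible (1 + y * x);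
  inv_1wv : forall a, (1 <= a <= d)%N -> invertible (1 + w a * v a);
  inv_1vw : forall a, (1 <= a <= d)%N -> invertible (1 + v a * w a)
}.

Record bracket_on_generators (F : fieldType) (A : algType F) (T : lmodType F)
    (tens : A -> A -> T) (br : A -> A -> T) (d : nat)
    (e0 einf x y : A) (v w : nat -> A) : Prop := BracketOnGenerators {
  br_e0l : forall a, br e0 a = 0;
  br_einfl : forall a, br einf a = 0;
  br_e0r : forall a, br a e0 = 0;
  br_einfr : forall a, br a einf = 0;
  br_xx : br x x = 2^-1 *: (tens (x * x) e0 - tens e0 (x * x));
  br_yy : br y y = 2^-1 *: (tens e0 (y * y) - tens (y * y) e0);
  br_xy : br x y = tens e0 e0
      + 2^-1 *: (tens (y * x) e0 + tens e0 (x * y) + tens y x - tens x y);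
  br_uw : forall u a, (u = x \/ u = y) -> (1 <= a <= d)%N ->
      br u (w a) = 2^-1 *: (tens e0 (u * w a) - tens u (w a));
  br_uv : forall u a, (u = x \/ u = y) -> (1 <= a <= d)%N ->
      br u (v a) = 2^-1 *: (tens (v a * u) e0 - tens (v a) u);
  br_vv : forall a b, (1 <= a <= d)%N -> (1 <= b <= d)%N ->
      br (v a) (v b) = (2^-1 * osgn F b a) *: (tens (v a) (v b) + tens (v b) (v a));
  br_ww : forall a b, (1 <= a <= d)%N -> (1 <= b <= d)%N ->
      br (w a) (w b) = (2^-1 * osgn F b a) *: (tens (w a) (w b) + tens (w b) (w a));
  br_vw : forall a b, (1 <= a <= d)%N -> (1 <= b <= d)%N ->
      br (v a) (w b) =
        (if a == b then
           tens e0 einf + 2^-1 *: tens (w a * v a) einf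
           + 2^-1 *: tens e0 (v a * w a)
         else 0)
        + (2^-1 * osgn F a b) *: (tens e0 (v a * w b) + tens (w b * v a) einf)
}.

Fixpoint sfun (A : pzRingType) (v w : nat -> A) (z : A) (a : nat) : A :=
  match a with
  | 0 => z
  | k.+1 => (1 + w k.+1 * v k.+1) * sfun v w z k
  end.

(* Main.v *)
Require Import Defs.
From HB Require Import structures.
From mathcomp Require Import all_boot all_order all_algebra.
From mathcomp Require Import ring zify.
Import Order.TTheory GRing.Theory Num.Theory.
Local Open Scope ring_scope.


Section LinNorm.
Variables (F : fieldType) (T : lmodType F).
Inductive lexpr : Type :=
  LZ | LA of nat | LP of lexpr & lexpr | LN of lexpr | LS of F & lexpr.
Fixpoint leval (env : seq T) (e : lexpr) : T :=
  match e with
  | LZ => 0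
  | LA i => nth 0 env i
  | LP a b => leval env a + leval env b
  | LN a => - leval env a
  | LS k a => k *: leval env a
  end.
Fixpoint lcoef (e : lexpr) (i : nat) : F :=
  match e with
  | LZ => 0
  | LA j => if Nat.eqb i j then 1 else 0
  | LP a b => lcoef a i + lcoef b i
  | LN a => - lcoef a i
  | LS k a => k * lcoef a i
  end.
Lemma leval_sum env e :
  leval env e = \sum_(i < size env) lcoef e i *: nth 0 env i.
Proof.
elim: e => [|j|a IHa b IHb|a IHa|k a IHa] /=.
- by rewrite big1 // => i _; rewrite scale0r.
- case: (ltnP j (size env)) => hj.
  + rewrite (bigD1 (Ordinal hj)) //= PeanoNat.Nat.eqb_refl scale1r big1 ?addr0 //.
    move=> i /eqP hi; case: PeanoNat.Nat.eqb_spec => [e|]; last by rewrite scale0r.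
    by case: hi; apply: val_inj.
  + rewrite nth_default // big1 // => i _.
    case: PeanoNat.Nat.eqb_spec => [e|]; last by rewrite scale0r.
    by have := ltn_ord i; rewrite e ltnNge hj.
- by rewrite IHa IHb -big_split /=; apply: eq_bigr => i _; rewrite scalerDl.
- by rewrite IHa -sumrN; apply: eq_bigr => i _; rewrite scaleNr.
- by rewrite IHa scaler_sumr; apply: eq_bigr => i _; rewrite scalerA.
Qed.
Fixpoint allcoef (e1 e2 : lexpr) (n k : nat) : Prop :=
  match n with 0 => True | S n' => lcoef e1 k = lcoef e2 k /\ allcoef e1 e2 n' (S k) end.
Lemma allcoef_aux e1 e2 n : forall k, allcoef e1 e2 n k ->
  forall i, (k <= i < k + n)%N -> lcoef e1 i = lcoef e2 i.
Proof.
elim: n => [|n IH] k /=; first by move=> _ i; lia.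
move=> [h1 h2] i hi; case: (eqVneq k i) => [<-//|hne].
apply: (IH k.+1) => //; move: hi hne; case/andP => ha hb hne.
apply/andP; split; first by rewrite ltn_neqAle hne.
by rewrite addSnnS.
Qed.
Lemma lcheck env e1 e2 : allcoef e1 e2 (size env) 0 -> leval env e1 = leval env e2.
Proof.
move=> H; rewrite !leval_sum; apply: eq_bigr => i _; congr (_ *: _).
apply: (@allcoef_aux e1 e2 _ 0 H); by rewrite add0n ltn_ord.
Qed.
End LinNorm.

Arguments LP {F}. Arguments LN {F}. Arguments LS {F}.

Ltac lfind x l :=
  match l with
  | (?y :: _)%SEQ => let _ := constr:(ltac:(unify x y; exact tt) : unit) in constr:(0%N)
  | (_ :: ?l')%SEQ => let n := lfind x l' in constr:(S n)
  end.

Ltac lreify F env t :=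
  lazymatch t with
  | @Algebra.zero _ => constr:((LZ F, env))
  | @Algebra.add _ ?a ?b =>
      match lreify F env a with
      | (?e1, ?env1) => match lreify F env1 b with
                        | (?e2, ?env2) => constr:((LP e1 e2, env2)) end end
  | @Algebra.opp _ ?a =>
      match lreify F env a with (?e1, ?env1) => constr:((LN e1, env1)) end
  | @GRing.scale _ _ ?k ?a =>
      match lreify F env a with (?e1, ?env1) => constr:((LS k e1, env1)) end
  | _ =>
      match env with
      | _ => let n := lfind t env in constr:((LA F n, env))
      | _ => let env' := eval cbv [rcons] in (rcons env t) in
             let n := lfind t env' in constr:((LA F n, env'))
      end
  end.

Ltac lin F :=
  match goal with
  | |- @eq ?Ty ?l ?r =>
    let nilT := constr:(@nil Ty) in
    match lreify F nilT l with
    | (?e1, ?env1) => match lreify F env1 r with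
      | (?e2, ?env2) =>
        apply: (@lcheck _ _ env2 e1 e2); cbn [allcoef lcoef size Nat.eqb];
        repeat split; first [ring | (field; by rewrite ?pnatr_eq0)]
      end end
  end.



Lemma addmor0 (U V : zmodType) (f : U -> V) :
  (forall a b, f (a + b) = f a + f b) -> f 0 = 0.
Proof. by move=> fD; apply: (addrI (f 0)); rewrite -fD !addr0. Qed.
Lemma addmorN (U V : zmodType) (f : U -> V) :
  (forall a b, f (a + b) = f a + f b) -> forall a, f (- a) = - f a.
Proof.
move=> fD a; apply: (addrI (f a)); rewrite -fD !subrr; exact: addmor0.
Qed.

Section Main.
Variables (F : numClosedFieldType) (d : nat) (A : algType F) (T : lmodType F)
  (tens : A -> A -> T) (lact : A -> T -> T) (ract : T -> A -> T)
  (swap : T -> T) (br : A -> A -> T)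
  (e0 einf x y xinv : A) (v w : nat -> A).
Hypotheses (HT : tensor_model tens lact ract swap)
  (Hbr : double_bracket lact ract swap br)
  (HA : quiver_relations d e0 einf x y xinv v w)
  (Hgen : bracket_on_generators tens br d e0 einf x y v w).

Lemma tDl u1 u2 v0 : tens (u1 + u2) v0 = tens u1 v0 + tens u2 v0. Proof. exact (tensDl HT u1 u2 v0). Qed.
Lemma tDr u v1 v2 : tens u (v1 + v2) = tens u v1 + tens u v2. Proof. apply (tensDr HT). Qed.
Lemma tNl u v0 : tens (- u) v0 = - tens u v0.
Proof. exact (@addmorN _ _ (fun u => tens u v0) (fun a b => tDl a b v0) u). Qed.
Lemma tNr u v0 : tens u (- v0) = - tens u v0.
Proof. exact (@addmorN _ _ (fun v0 => tens u v0) (fun a b => tDr u a b) v0). Qed.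
Lemma t0l v0 : tens 0 v0 = 0. Proof. exact (@addmor0 _ _ (fun u => tens u v0) (fun a b => tDl a b v0)). Qed.
Lemma t0r u : tens u 0 = 0. Proof. exact (@addmor0 _ _ (fun v0 => tens u v0) (fun a b => tDr u a b)). Qed.

Lemma lD b t1 t2 : lact b (t1 + t2) = lact b t1 + lact b t2. Proof. apply (lactDr HT). Qed.
Lemma lN b t : lact b (- t) = - lact b t. Proof. exact (@addmorN _ _ _ (lD b) t). Qed.
Lemma lZ b k t : lact b (k *: t) = k *: lact b t. Proof. apply (lactZr HT). Qed.
Lemma l0 b : lact b 0 = 0. Proof. exact (@addmor0 _ _ _ (lD b)). Qed.
Lemma rD t1 t2 c : ract (t1 + t2) c = ract t1 c + ract t2 c. Proof. apply (ractDl HT). Qed.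
Lemma rN t c : ract (- t) c = - ract t c.
Proof. exact (@addmorN _ _ (fun t => ract t c) (fun a b => rD a b c) t). Qed.
Lemma rZ k t c : ract (k *: t) c = k *: ract t c. Proof. apply (ractZl HT). Qed.
Lemma r0 c : ract 0 c = 0. Proof. exact (@addmor0 _ _ (fun t => ract t c) (fun a b => rD a b c)). Qed.
Lemma sD t1 t2 : swap (t1 + t2) = swap t1 + swap t2. Proof. apply (swapD HT). Qed.
Lemma sN t : swap (- t) = - swap t. Proof. exact (@addmorN _ _ _ sD t). Qed.
Lemma sZ k t : swap (k *: t) = k *: swap t. Proof. apply (swapZ HT). Qed.
Lemma s0 : swap 0 = 0. Proof. exact (@addmor0 _ _ _ sD). Qed.
Lemma lT b u v0 : lact b (tens u v0) = tens (b * u) v0. Proof. apply (lact_tens HT). Qed.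
Lemma rT u v0 c : ract (tens u v0) c = tens u (v0 * c). Proof. apply (ract_tens HT). Qed.
Lemma sT u v0 : swap (tens u v0) = tens v0 u. Proof. apply (swap_tens HT). Qed.

Lemma bDl a1 a2 b : br (a1 + a2) b = br a1 b + br a2 b. Proof. apply (brDl Hbr). Qed.
Lemma bDr a b1 b2 : br a (b1 + b2) = br a b1 + br a b2. Proof. apply (brDr Hbr). Qed.
Lemma bNl a b : br (- a) b = - br a b.
Proof. exact (@addmorN _ _ (fun a => br a b) (fun a1 a2 => bDl a1 a2 b) a). Qed.
Lemma bNr a b : br a (- b) = - br a b.
Proof. exact (@addmorN _ _ (fun b => br a b) (fun b1 b2 => bDr a b1 b2) b). Qed.
Lemma bskew a b : br a b = - swap (br b a). Proof. apply (br_skew Hbr). Qed.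
Lemma bMr a b c : br a (b * c) = lact b (br a c) + ract (br a b) c.
Proof. apply (br_leibniz Hbr). Qed.
Lemma bMl a b c : br (b * c) a = swap (ract (swap (br b a)) c) + swap (lact b (swap (br c a))).
Proof.
rewrite (br_leibnizl Hbr) /inner_act (lact1 HT) (ract1 HT); done.
Qed.

Definition pushT := (tDl, tDr, tNl, tNr, t0l, t0r, lD, lN, lZ, l0, rD, rN, rZ, r0,
  sD, sN, sZ, s0, lT, rT, sT).


Lemma at0l u : u = e0 * u * e0 -> e0 * u = u.
Proof. by move=> h; rewrite h !mulrA (e0_idem HA). Qed.
Lemma at0r u : u = e0 * u * e0 -> u * e0 = u.
Proof. by move=> h; rewrite h -!mulrA (e0_idem HA). Qed.
Lemma e0x : e0 * x = x. Proof. exact: at0l (x_at0 HA). Qed.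
Lemma xe0 : x * e0 = x. Proof. exact: at0r (x_at0 HA). Qed.
Lemma e0y : e0 * y = y. Proof. exact: at0l (y_at0 HA). Qed.
Lemma ye0 : y * e0 = y. Proof. exact: at0r (y_at0 HA). Qed.
Lemma e0xi : e0 * xinv = xinv. Proof. exact: at0l (xinv_at0 HA). Qed.
Lemma xie0 : xinv * e0 = xinv. Proof. exact: at0r (xinv_at0 HA). Qed.
Lemma xe0' r : r * x * e0 = r * x. Proof. by rewrite -mulrA xe0. Qed.
Lemma ye0' r : r * y * e0 = r * y. Proof. by rewrite -mulrA ye0. Qed.
Lemma xie0' r : r * xinv * e0 = r * xinv. Proof. by rewrite -mulrA xie0. Qed.
Lemma xxi : x * xinv = e0. Proof. exact: (x_xinv HA). Qed.
Lemma xix : xinv * x = e0. Proof. exact: (xinv_x HA). Qed.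
Lemma xxi' r : r * x * xinv = r * e0. Proof. by rewrite -mulrA xxi. Qed.
Lemma xix' r : r * xinv * x = r * e0. Proof. by rewrite -mulrA xix. Qed.
Lemma e0e0 : e0 * e0 = e0. Proof. exact: (e0_idem HA). Qed.
Lemma e0w {c} : (1 <= c <= d)%N -> e0 * w c = w c.
Proof. by move=> h; rewrite (w_arrow HA h) !mulrA e0e0. Qed.
Lemma winf {c} : (1 <= c <= d)%N -> w c * einf = w c.
Proof. by move=> h; rewrite (w_arrow HA h) -!mulrA (einf_idem HA). Qed.
Lemma infv {c} : (1 <= c <= d)%N -> einf * v c = v c.
Proof. by move=> h; rewrite (v_arrow HA h) !mulrA (einf_idem HA). Qed.
Lemma ve0 {c} : (1 <= c <= d)%N -> v c * e0 = v c.
Proof. by move=> h; rewrite (v_arrow HA h) -!mulrA e0e0. Qed.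

Lemma br1 a : br a 1 = 0.
Proof. by rewrite -(e0_einf_sum HA) bDr (br_e0r Hgen) (br_einfr Hgen) addr0. Qed.

Lemma brxi u : br u xinv = - lact xinv (ract (br u x) xinv).
Proof.
have h := bMr u x xinv; rewrite xxi (br_e0r Hgen) in h.
have h2 : br u xinv = lact e0 (br u xinv).
  by rewrite -{1}e0xi bMr (br_e0r Hgen) r0 addr0.
rewrite h2 -xix (lactM HT) -lN; congr (lact xinv _).
by apply/eqP; rewrite -addr_eq0 -h.
Qed.

Ltac asimp := rewrite ?mulrA;
  rewrite ?(e0x, xe0, e0y, ye0, e0xi, xie0, xe0', ye0', xie0', xxi, xix, xxi', xix', e0e0).

Definition z := y + xinv.
Lemma e0z : e0 * z = z. Proof. by rewrite /z mulrDr e0y e0xi. Qed.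
Lemma ze0 : z * e0 = z. Proof. by rewrite /z mulrDl ye0 xie0. Qed.

Lemma bzz : br z z = 2^-1 *: (tens e0 (z * z) - tens (z * z) e0).
Proof.
rewrite /z !bDl !bDr.
rewrite (bskew xinv y) !brxi (bskew xinv x) brxi (bskew y x).
rewrite (br_xx Hgen) (br_yy Hgen) (br_xy Hgen).
rewrite ?mulrDl ?mulrDr !pushT.
asimp.
lin F.
Qed.

Definition Lw c u := br u (w c) = 2^-1 *: (tens e0 (u * w c) - tens u (w c)).
Definition Lv c u := br u (v c) = 2^-1 *: (tens (v c * u) e0 - tens (v c) u).

Lemma Lw_add c p q : Lw c p -> Lw c q -> Lw c (p + q).
Proof.
rewrite /Lw => hp hq; rewrite bDl hp hq ?mulrDl !pushT; lin F.
Qed.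
Lemma Lv_add c p q : Lv c p -> Lv c q -> Lv c (p + q).
Proof.
rewrite /Lv => hp hq; rewrite bDl hp hq ?mulrDr !pushT; lin F.
Qed.
Lemma Lw_mul c p q : e0 * q = q -> Lw c p -> Lw c q -> Lw c (p * q).
Proof.
rewrite /Lw => h0 hp hq; rewrite bMl hp hq !pushT !mulrA h0; lin F.
Qed.
Lemma Lv_mul c p q : p * e0 = p -> Lv c p -> Lv c q -> Lv c (p * q).
Proof.
rewrite /Lv => h0 hp hq; rewrite bMl hp hq !pushT !mulrA h0; lin F.
Qed.

Lemma Lw_z c : (1 <= c <= d)%N -> Lw c z.
Proof.
move=> hc; rewrite /Lw /z bDl (bskew xinv) brxi (bskew (w c) x).
rewrite (br_uw Hgen (or_intror erefl) hc) (br_uw Hgen (or_introl erefl) hc).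
rewrite ?mulrDl !pushT; asimp; rewrite ?(e0w hc).
lin F.
Qed.
Lemma Lv_z c : (1 <= c <= d)%N -> Lv c z.
Proof.
move=> hc; rewrite /Lv /z bDl (bskew xinv) brxi (bskew (v c) x).
rewrite (br_uv Hgen (or_intror erefl) hc) (br_uv Hgen (or_introl erefl) hc).
rewrite ?mulrDr !pushT; asimp; rewrite ?(ve0 hc).
lin F.
Qed.

Lemma osgn_eq a : osgn F a a = 0. Proof. by rewrite /osgn eqxx. Qed.
Lemma osgn_lt {a b} : (a < b)%N -> osgn F a b = 1.
Proof. by move=> h; rewrite /osgn h; case: eqP => // e; move: h; rewrite e ltnn. Qed.
Lemma osgn_gt {a b} : (b < a)%N -> osgn F a b = -1.
Proof.
move=> h; rewrite /osgn ltnNge (ltnW h) /=; case: eqP => // e; move: h; rewrite e ltnn //.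
Qed.

Lemma Lw_wv c e : (1 <= e)%N -> (e < c)%N -> (c <= d)%N -> Lw c (w e * v e).
Proof.
move=> h1 h2 h3.
have he : (1 <= e <= d)%N by rewrite h1 /=; apply: ltnW (leq_trans h2 h3).
have hc : (1 <= c <= d)%N by rewrite h3 andbT; apply: leq_trans h1 (ltnW h2).
rewrite /Lw bMl (br_ww Hgen he hc) (br_vw Hgen he hc) (osgn_gt h2) (osgn_lt h2).
rewrite ifN_eq ?(ltn_eqF h2) // add0r !pushT !mulrA (winf he).
lin F.
Qed.
Lemma Lv_wv c e : (1 <= e)%N -> (e < c)%N -> (c <= d)%N -> Lv c (w e * v e).
Proof.
move=> h1 h2 h3.
have he : (1 <= e <= d)%N by rewrite h1 /=; apply: ltnW (leq_trans h2 h3).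
have hc : (1 <= c <= d)%N by rewrite h3 andbT; apply: leq_trans h1 (ltnW h2).
rewrite /Lv bMl (bskew (w e)) (br_vv Hgen he hc) (br_vw Hgen hc he) (osgn_gt h2).
rewrite ifN_eq ?(gtn_eqF h2) // add0r !pushT !mulrA (infv he).
lin F.
Qed.

Lemma KK c : (1 <= c <= d)%N ->
  br (w c * v c) (w c * v c) =
  2^-1 *: (tens e0 (w c * v c * (w c * v c)) - tens (w c * v c * (w c * v c)) e0)
  + (tens e0 (w c * v c) - tens (w c * v c) e0).
Proof.
move=> hc.
rewrite (bMl (w c * v c) (w c) (v c)) (bMr (w c) (w c) (v c)) (bMr (v c) (w c) (v c)).
rewrite (bskew (w c) (v c)) (br_vw Hgen hc hc) (br_ww Hgen hc hc) (br_vv Hgen hc hc).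
rewrite eqxx osgn_eq !pushT !mulrA ?(winf hc) ?(infv hc) ?(e0w hc) ?(ve0 hc).
lin F.
Qed.

Lemma HpK_of {c p} : Lw c p -> Lv c p ->
  br p (w c * v c) = 2^-1 *: (tens (w c * v c * p) e0 - tens (w c * v c) p
                             + tens e0 (p * (w c * v c)) - tens p (w c * v c)).
Proof.
rewrite /Lw /Lv => hw hv; rewrite bMr hw hv !pushT !mulrA; lin F.
Qed.

Lemma Diag p K : e0 * p = p -> p * e0 = p -> e0 * K = K -> K * e0 = K ->
  br p p = 2^-1 *: (tens e0 (p * p) - tens (p * p) e0) ->
  br K K = 2^-1 *: (tens e0 (K * K) - tens (K * K) e0) + (tens e0 K - tens K e0) ->
  br p K = 2^-1 *: (tens (K * p) e0 - tens K p + tens e0 (p * K) - tens p K) ->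
  br (p + K * p) (p + K * p) =
  2^-1 *: (tens e0 ((p + K * p) * (p + K * p)) - tens ((p + K * p) * (p + K * p)) e0).
Proof.
move=> e0p pe0 e0K Ke0 Hpp HKK HpK.
have pe0' r : r * p * e0 = r * p by rewrite -mulrA pe0.
have Ke0' r : r * K * e0 = r * K by rewrite -mulrA Ke0.
rewrite !bDl !bDr (bMl (K * p) K p) (bMl p K p) (bMr K K p) (bMr p K p).
rewrite (bskew K p) Hpp HKK HpK ?mulrDl ?mulrDr !pushT !mulrA.
rewrite ?e0p ?pe0 ?e0K ?Ke0 ?pe0' ?Ke0'.
lin F.
Qed.

Lemma Off1 p q K : e0 * q = q -> K * e0 = K ->
  br p q = 2^-1 *: (tens e0 (p * q) - tens (q * p) e0) + (2^-1 * 1) *: (tens q p - tens p q) ->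
  br p K = 2^-1 *: (tens (K * p) e0 - tens K p + tens e0 (p * K) - tens p K) ->
  br p (q + K * q) = 2^-1 *: (tens e0 (p * (q + K * q)) - tens ((q + K * q) * p) e0)
     + (2^-1 * 1) *: (tens (q + K * q) p - tens p (q + K * q)).
Proof.
move=> e0q Ke0 Hpq HpK.
rewrite bDr (bMr p K q) Hpq HpK ?mulrDl ?mulrDr !pushT !mulrA ?e0q ?Ke0.
lin F.
Qed.

Lemma Off0 p K : e0 * p = p -> K * e0 = K ->
  br p p = 2^-1 *: (tens e0 (p * p) - tens (p * p) e0) ->
  br p K = 2^-1 *: (tens (K * p) e0 - tens K p + tens e0 (p * K) - tens p K) ->
  br p (p + K * p) = 2^-1 *: (tens e0 (p * (p + K * p)) - tens ((p + K * p) * p) e0)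
     + (2^-1 * 1) *: (tens (p + K * p) p - tens p (p + K * p)).
Proof.
move=> e0q Ke0 Hpq HpK.
rewrite bDr (bMr p K p) Hpq HpK ?mulrDl ?mulrDr !pushT !mulrA ?e0q ?Ke0.
lin F.
Qed.

Notation s := (sfun v w z).

Lemma sS a : s a.+1 = s a + w a.+1 * v a.+1 * s a.
Proof. by rewrite /= mulrDl mul1r. Qed.

Lemma s_e0 {a} : (a <= d)%N -> e0 * s a = s a /\ s a * e0 = s a.
Proof.
elim: a => [|a IH] h; first by rewrite /= e0z ze0.
have ha : (1 <= a.+1 <= d)%N by rewrite h.
have [h1 h2] := IH (ltnW h).
rewrite sS mulrDr mulrDl !mulrA (e0w ha) h1 -!mulrA h2; done.
Qed.

Lemma Lw_s {c a} : (a < c)%N -> (c <= d)%N -> Lw c (s a).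
Proof.
elim: a => [|a IH] h1 h2.
  by apply: Lw_z; rewrite h2 andbT; apply: leq_trans h1.
rewrite sS; apply: Lw_add; first exact: IH (ltnW h1) h2.
apply: Lw_mul; first by case: (s_e0 (ltnW (leq_trans (ltnW h1) h2))).
  exact: Lw_wv.
exact: IH (ltnW h1) h2.
Qed.

Lemma Lv_s {c a} : (a < c)%N -> (c <= d)%N -> Lv c (s a).
Proof.
elim: a => [|a IH] h1 h2.
  by apply: Lv_z; rewrite h2 andbT; apply: leq_trans h1.
have ha : (1 <= a.+1 <= d)%N by rewrite /=; apply: ltnW (leq_trans h1 h2).
rewrite sS; apply: Lv_add; first exact: IH (ltnW h1) h2.
apply: Lv_mul; first by rewrite -mulrA (ve0 ha).
  exact: Lv_wv.
exact: IH (ltnW h1) h2.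
Qed.

Lemma Dg a : (a <= d)%N ->
  br (s a) (s a) = 2^-1 *: (tens e0 (s a * s a) - tens (s a * s a) e0).
Proof.
elim: a => [|a IH] h; first exact: bzz.
have ha : (1 <= a.+1 <= d)%N by rewrite h.
have [h1 h2] := s_e0 (ltnW h).
rewrite sS; apply: Diag => //.
- by rewrite mulrA (e0w ha).
- by rewrite -mulrA (ve0 ha).
- exact: IH (ltnW h).
- exact: KK.
- exact: HpK_of (Lw_s (ltnSn a) h) (Lv_s (ltnSn a) h).
Qed.

Lemma Ob a b : (a < b)%N -> (b <= d)%N ->
  br (s a) (s b) = 2^-1 *: (tens e0 (s a * s b) - tens (s b * s a) e0)
     + (2^-1 * 1) *: (tens (s b) (s a) - tens (s a) (s b)).
Proof.
elim: b => [|b IH] // hab h.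
have hb : (1 <= b.+1 <= d)%N by rewrite h.
have [h1 h2] := s_e0 (ltnW h).
have HpK : br (s a) (w b.+1 * v b.+1) = 2^-1 *: (tens (w b.+1 * v b.+1 * s a) e0
   - tens (w b.+1 * v b.+1) (s a) + tens e0 (s a * (w b.+1 * v b.+1)) - tens (s a) (w b.+1 * v b.+1)).
  exact: HpK_of (Lw_s hab h) (Lv_s hab h).
rewrite sS; case: (ltngtP a b) => hab'.
- apply: Off1 => //; first by rewrite -mulrA (ve0 hb).
  exact: IH hab' (ltnW h).
- by move: hab; rewrite ltnS leqNgt hab'.
- subst b; apply: Off0 => //; first by rewrite -mulrA (ve0 hb).
  exact: Dg (ltnW h).
Qed.

Lemma Pab a b : (a <= d)%N -> (b <= d)%N ->
  br (s a) (s b) =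
    2^-1 *: (tens e0 (s a * s b) - tens (s b * s a) e0)
    + (2^-1 * osgn F a b) *: (tens (s b) (s a) - tens (s a) (s b)).
Proof.
move=> ha hb; case: (ltngtP a b) => hab.
- by rewrite (osgn_lt hab) Ob.
- rewrite (osgn_gt hab) bskew Ob // !pushT; lin F.
- subst b; rewrite osgn_eq Dg //; lin F.
Qed.

End Main.

Theorem mainTheorem6 (F : numClosedFieldType) (d : nat)
    (A : algType F) (T : lmodType F)
    (tens : A -> A -> T) (lact : A -> T -> T) (ract : T -> A -> T)
    (swap : T -> T) (br : A -> A -> T)
    (e0 einf x y xinv : A) (v w : nat -> A)
    (HT : tensor_model tens lact ract swap)
    (Hbr : double_bracket lact ract swap br)
    (HA : quiver_relations d e0 einf x y xinv v w)
    (Hgen : bracket_on_generators tens br d e0 einf x y v w)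
    (a b : nat) (ha : (a <= d)%N) (hb : (b <= d)%N) :
  let z := y + xinv in
  let s := sfun v w z in
  br (s a) (s b) =
    2^-1 *: (tens e0 (s a * s b) - tens (s b * s a) e0)
    + (2^-1 * osgn F a b) *: (tens (s b) (s a) - tens (s a) (s b)).
Proof.
move=> z0 s0.
exact (@Pab F d A T tens lact ract swap br e0 einf x y xinv v w HT Hbr HA Hgen a b ha hb).
Qed.
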